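(* Let $L$ be a linear forest with $k$ vertices. If $q\ge k+1$ and $r\ge k-1$ are integers, then $s(P_{q+r},L)=s(C_q+P_r,L)$.
   Context: A linear forest is a disjoint union of paths. $P_j$ and $C_j$ are the path and cycle with $j$ vertices, $P_0$ is the graph with no vertices, and $+$ denotes disjoint union. For graphs $G,H$, $s(G,H)$ is the number of vertex subsets $X\subseteq V(G)$ such that $G[X]$ is isomorphic to $H$. *)

(* Defs.v *)
From mathcomp Require Import all_boot.
Set Implicit Arguments. Unset Strict Implicit. Unset Printing Implicit Defensive.

Definition path_rel (n : nat) : rel 'I_n :=
  fun i j => ((val i).+1 == val j) || ((val j).+1 == val i).

Definition cycle_rel (q : nat) : rel 'I_q :=
  fun i j => (i != j) && (((val i).+1 %% q == val j) || ((val j).+1 %% q == val i)).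

Definition sum_rel (A B : finType) (ea : rel A) (eb : rel B) : rel (A + B)%type :=
  fun x y => match x, y with
             | inl a, inl a' => ea a a'
             | inr b, inr b' => eb b b'
             | _, _ => false
             end.

(* Disjoint union of paths P_{s_0} + P_{s_1} + ... *)
Definition lf_vertex (s : seq nat) : finType :=
  {i : 'I_(size s) & 'I_(nth 0 s i)}.

Arguments lf_vertex : clear implicits.
Definition lf_rel (s : seq nat) : rel (lf_vertex s) :=
  fun x y => (tag x == tag y) &&
             (((val (tagged x)).+1 == val (tagged y)) ||
              ((val (tagged y)).+1 == val (tagged x))).

Definition graph_iso (T T' : finType) (e : rel T) (e' : rel T') : Prop :=
  exists f : T -> T', bijective f /\ forall x y, e x y = e' (f x) (f y).

Definition linear_forest (T : finType) (e : rel T) : Prop :=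
  exists s : seq nat, graph_iso e (@lf_rel s).

Definition induced_copy (V T : finType) (eG : rel V) (eH : rel T) (X : {set V}) : bool :=
  [exists f : {ffun T -> V},
     [&& injectiveb f, f @: [set: T] == X &
         [forall x, forall y, eH x y == eG (f x) (f y)]]].

Definition s_count (V T : finType) (eG : rel V) (eH : rel T) : nat :=
  #|[set X : {set V} | induced_copy eG eH X]|.
Arguments path_rel : clear implicits.
Arguments cycle_rel : clear implicits.

(* Main.v *)
Require Import Defs.
From mathcomp Require Import all_boot zify.
Set Implicit Arguments. Unset Strict Implicit. Unset Printing Implicit Defensive.


Definition QT := forall V : finType, rel V -> {set V} -> bool.

Definition Qinv (Q : QT) := forall (A V : finType) (eA : rel A) (eV : rel V)
  (phi : A -> V) (S : {set A}),
  {in S &, injective phi} -> {in S &, forall x y, eA x y = eV (phi x) (phi y)} ->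
  Q A eA S = Q V eV (phi @: S).

Definition Qsize (Q : QT) k := forall (V : finType) (e : rel V) (S : {set V}), Q V e S -> #|S| = k.

Definition Q0 (T : finType) (eL : rel T) : QT := fun V e X => induced_copy e eL X.

Lemma Q0_inv (T : finType) (eL : rel T) : Qinv (Q0 eL).
Proof.
move=> A V eA eV phi S phiI phiE; rewrite /Q0 /induced_copy.
apply/existsP/existsP.
- case=> f /and3P[/injectiveP fI /eqP fS /forallP fE].
  have fin : forall t, f t \in S by move=> t; rewrite -fS imset_f.
  exists [ffun t => phi (f t)]; apply/and3P; split.
  + apply/injectiveP=> t t'; rewrite !ffunE => /phiI; move=> h; apply: fI; exact: h.
  + apply/eqP; rewrite -fS -imset_comp; apply: eq_imset=> t; by rewrite ffunE.
  + apply/forallP=> x; apply/forallP=> y; rewrite !ffunE -phiE //.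
    by move/forallP: (fE x) => /(_ y).
- case=> f /and3P[/injectiveP fI /eqP fS /forallP fE].
  have: forall t, exists a, (a \in S) && (f t == phi a).
    move=> t; have : f t \in phi @: S by rewrite -fS imset_f.
    by case/imsetP=> a aS ->; exists a; rewrite aS eqxx.
  case/fin_all_exists=> g gP.
  have gS t : g t \in S by case/andP: (gP t).
  have gE t : f t = phi (g t) by case/andP: (gP t) => _ /eqP.
  exists [ffun t => g t]; apply/and3P; split.
  + apply/injectiveP=> t t'; rewrite !ffunE => h; apply: fI; by rewrite !gE h.
  + rewrite eqEsubset; apply/andP; split.
    * apply/subsetP=> a /imsetP[t _ ->]; by rewrite ffunE.
    * apply/subsetP=> a aS; have : phi a \in f @: setT by rewrite fS imset_f.
      case/imsetP=> t _; rewrite gE => /phiI-/(_ aS (gS t)) ->.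
      by apply/imsetP; exists t => //; rewrite ffunE.
  + apply/forallP=> x; apply/forallP=> y; rewrite !ffunE phiE ?gS //.
    by move/forallP: (fE x) => /(_ y); rewrite !gE.
Qed.

Lemma Q0_size (T : finType) (eL : rel T) : Qsize (Q0 eL) #|T|.
Proof.
move=> V e S; rewrite /Q0 /induced_copy => /existsP[f /and3P[/injectiveP fI /eqP <- _]].
by rewrite card_imset // cardsT.
Qed.

Definition sum_map (A V B : finType) (phi : A -> V) (z : A + B) : V + B :=
  match z with inl a => inl (phi a) | inr b => inr b end.

Definition Qext (Q : QT) (l : nat) : QT := fun V e X =>
  Q _ (sum_rel e (path_rel l)) ((inl @: X) :|: (inr @: [set: 'I_l])).

Arguments Qext Q l V e X : clear implicits.
Arguments Q0 T eL V e X : clear implicits.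

Lemma Qext_inv Q l : Qinv Q -> Qinv (Qext Q l).
Proof.
move=> QI A V eA eV phi S phiI phiE; rewrite /Qext.
rewrite (QI _ _ _ (sum_rel eV (path_rel l)) (@sum_map A V 'I_l phi)).
- congr Q; rewrite imsetU -!imset_comp; congr (_ :|: _); by apply: eq_imset.
- move=> [a|a] [b|b] /setUP[] /imsetP[a' a'S] // [->] /setUP[] /imsetP[b' b'S] //= [->] //.
  + by move=> [] /phiI ->.
  + by move=> [] ->.
- move=> [a|a] [b|b] /setUP[] /imsetP[a' a'S] // [->] /setUP[] /imsetP[b' b'S] //= [->] //.
  exact: phiE.
Qed.

Lemma Qext_size Q k l : Qsize Q k -> Qsize (Qext Q l) (k - l).
Proof.
move=> QS V e S /QS; rewrite cardsU.
have -> : inl @: S :&: inr @: [set: 'I_l] = set0.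
  apply/setP=> z; rewrite !inE; apply/negP=> /andP[/imsetP[? _ ->] /imsetP[? _]] //.
rewrite cards0 subn0 !card_imset; [|move=> ? ? []//|move=> ? ? []//].
by rewrite cardsT card_ord => <-; rewrite addnK.
Qed.


Definition cnt (V : finType) (e : rel V) (Q : QT) := #|[set X | Q V e X]|.

Lemma card_split (V : finType) (P b : {set V} -> bool) :
  #|[set X | P X]| = #|[set X | P X && b X]| + #|[set X | P X && ~~ b X]|.
Proof.
rewrite -(cardsID [set X | b X] [set X | P X]); congr (_ + _); apply/eq_card=> X; rewrite !inE; by case: (P X); case: (b X).
Qed.

Section Rec.
Variables (n : nat) (R : {set 'I_n} -> bool) (pos : nat -> 'I_n -> bool).

Definition allp (X : {set 'I_n}) m := all (fun t => [exists v in X, pos t v]) (iota 0 m).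

Definition cf m := #|[set X | R X && allp X m]|.
Definition cg m := #|[set X | R X && allp X m && ~~ [exists v in X, pos m v]]|.

Lemma cf_rec m : cf m = cg m + cf m.+1.
Proof.
rewrite /cf /cg (card_split _ (fun X => [exists v in X, pos m v])); rewrite addnC.
congr (_ + _); apply: eq_card=> X; rewrite !inE /allp -addn1 iotaD all_cat /= andbT.
by rewrite !andbA.
Qed.

Lemma cf_sum K : cf 0 = \sum_(t < K) cg t + cf K.
Proof.
elim: K => [|K IH]; first by rewrite big_ord0.
by rewrite IH big_ord_recr /= cf_rec addnA.
Qed.

Lemma allpP (X : {set 'I_n}) m : reflect (forall t, t < m -> exists2 v, v \in X & pos t v) (allp X m).
Proof.
apply: (iffP allP)=> [h t tm|h t].
  have : t \in iota 0 m by rewrite mem_iota.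
  by move/h/existsP=> [v /andP[]]; exists v.
rewrite mem_iota add0n => /h[v vX pv]; apply/existsP; exists v; by rewrite vX.
Qed.

Lemma count_pos (X : {set 'I_n}) m :
  (forall t t' v, pos t v -> pos t' v -> t = t') -> allp X m -> m <= #|X|.
Proof.
move=> pI /allpP h.
have: forall t : 'I_m, exists v, (v \in X) && pos t v.
  by move=> t; have [v vX pv] := h t (ltn_ord t); exists v; rewrite vX.
case/fin_all_exists=> g gP.
have gI : injective g.
  move=> t t' e; apply: val_inj; case/andP: (gP t) => _ p1; case/andP: (gP t') => _ p2.
  by apply: (pI _ _ (g t)) => //; rewrite e.
rewrite -{1}(card_ord m) -cardsT -(card_imset setT gI); apply: subset_leq_card.
apply/subsetP=> v /imsetP[t _ ->]; by case/andP: (gP t).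
Qed.

Lemma cf_zero k m : (forall X, R X -> #|X| <= k) ->
  (forall t t' v, pos t v -> pos t' v -> t = t') -> k < m -> cf m = 0.
Proof.
move=> RS pI km; apply: eq_card0=> X; rewrite !inE; apply/negP=> /andP[/RS XS /(count_pos pI)].
by move=> h; have := leq_trans h XS; rewrite leqNgt km.
Qed.

End Rec.

Lemma cf0 n R pos : @cf n R pos 0 = #|[set X | R X]|.
Proof. by apply: eq_card=> X; rewrite !inE /allp /= andbT. Qed.

Lemma cf_cmp k n1 n2 (R1 : {set 'I_n1} -> bool) (R2 : {set 'I_n2} -> bool) (pos1 : nat -> 'I_n1 -> bool) (pos2 : nat -> 'I_n2 -> bool) :
  (forall X, R1 X -> #|X| <= k) -> (forall X, R2 X -> #|X| <= k) ->
  (forall t t' v, pos1 t v -> pos1 t' v -> t = t') ->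
  (forall t t' v, pos2 t v -> pos2 t' v -> t = t') ->
  (forall m, m <= k -> @cg n1 R1 pos1 m = @cg n2 R2 pos2 m) ->
  #|[set X | R1 X]| = #|[set X | R2 X]|.
Proof.
move=> S1 S2 I1 I2 E; rewrite -(cf0 R1 pos1) -(cf0 R2 pos2) !(cf_sum _ _ k.+1).
rewrite (cf_zero S1 I1 (ltnSn k)) (cf_zero S2 I2 (ltnSn k)) !addn0.
apply: eq_bigr=> i _; apply: E; rewrite -ltnS; exact: ltn_ord.
Qed.

Lemma cnt_bij (V W : finType) (e1 : rel V) (e2 : rel W) (f : V -> W) Q :
  Qinv Q -> bijective f -> (forall x y, e1 x y = e2 (f x) (f y)) -> cnt e1 Q = cnt e2 Q.
Proof.
move=> QI fB fE; have fI := bij_inj fB; case: fB => g fg gf.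
rewrite /cnt -(card_imset _ (imset_inj fI)); apply: eq_card=> Y; rewrite inE.
apply/imsetP/idP=> [[X] | QY].
- rewrite inE => QX ->; rewrite -(QI V W e1 e2 f X) //; by move=> x y _ _; apply: fI.
- exists (g @: Y); last by rewrite -imset_comp (eq_imset _ gf) imset_id.
  rewrite inE (QI V W e1 e2 f) -?imset_comp ?(eq_imset _ gf) ?imset_id //.
  by move=> x y _ _; apply: fI.
Qed.


Definition phiW (n m l : nat) (e : 'I_m -> 'I_n) (b : 'I_l -> 'I_n) (z : 'I_m + 'I_l) : 'I_n :=
  match z with inl i => e i | inr s => b s end.

Lemma window (n m l : nat) (G : rel 'I_n) (H : rel 'I_m) (Q : QT) (e : 'I_m -> 'I_n)
  (b : 'I_l -> 'I_n) (P : {set 'I_n} -> bool) :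
  Qinv Q -> injective e -> injective b ->
  (forall i j, H i j = G (e i) (e j)) ->
  (forall s s', path_rel l s s' = G (b s) (b s')) ->
  (forall i s, G (e i) (b s) = false) -> (forall i s, G (b s) (e i) = false) ->
  (forall i s, e i != b s) ->
  (forall X, P X = [&& Q _ G X, [forall s, b s \in X] &
                    [forall v in X, [exists s, v == b s] || [exists i, v == e i]]]) ->
  #|[set X | P X]| = cnt H (Qext Q l).
Proof.
move=> QI eI bI HE bE ebF beF ebD PE.
pose F (Y : {set 'I_m}) := b @: setT :|: e @: Y.
have key Y : Qext Q l _ H Y = Q _ G (F Y).
  rewrite /Qext (QI _ _ _ G (phiW e b)).
  - congr Q; rewrite /F imsetU setUC -!imset_comp; congr (_ :|: _); exact: eq_imset.
  - move=> [i|s] [j|t] _ _ //= h; first by rewrite (eI _ _ h).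
    + by move: (ebD i t); rewrite h eqxx.
    + by move: (ebD j s); rewrite h eqxx.
    + by rewrite (bI _ _ h).
  - move=> [i|s] [j|t] _ _ //=; by rewrite ?ebF ?beF.
have memF Y i : (e i \in F Y) = (i \in Y).
  rewrite /F in_setU mem_imset //; case: imsetP => //= -[s _ h].
  by move: (ebD i s); rewrite h eqxx.
have FI : injective F.
  move=> Y1 Y2 h; apply/setP=> i; by rewrite -!memF h.
rewrite /cnt -(card_imset _ FI); apply: eq_card=> X; rewrite inE.
apply/idP/imsetP=> [PX|[Y]].
- move: PX; rewrite PE => /and3P[QX /forallP bX /forallP rX].
  have XF : X = F (e @^-1: X).
    apply/setP=> v; apply/idP/idP=> [vX|].
    + case/orP: (implyP (rX v) vX) => /existsP[x /eqP vE]; rewrite /F in_setU vE.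
      * by rewrite imset_f.
      * by rewrite mem_imset // inE -vE vX orbT.
    + rewrite /F in_setU => /orP[/imsetP[s _ ->] | /imsetP[i]]; first exact: bX.
      by rewrite inE => ? ->.
  exists (e @^-1: X); last exact: XF.
  by rewrite inE key -XF QX.
- rewrite inE key => QY ->; rewrite PE QY /=; apply/andP; split.
  + apply/forallP=> s; by rewrite /F in_setU imset_f.
  + apply/forallP=> v; apply/implyP; rewrite /F in_setU => /orP[]/imsetP[x _ ->].
    * by apply/orP; left; apply/existsP; exists x.
    * by apply/orP; right; apply/existsP; exists x.
Qed.

Lemma runcase n l (G : rel 'I_n) (b : 'I_l -> 'I_n) (Q : QT) (P : {set 'I_n} -> bool)
  (extra : {set 'I_n} -> bool) :
  Qinv Q -> Qsize Q l -> injective b -> (forall s s', path_rel l s s' = G (b s) (b s')) ->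
  (forall X, P X = [&& Q _ G X, [forall s, b s \in X] & extra X]) -> extra (b @: setT) ->
  #|[set X | P X]| = Q _ (path_rel l) setT.
Proof.
move=> QI QS bI bE PE ex.
have QB : Q _ G (b @: setT) = Q _ (path_rel l) setT.
  by rewrite (QI _ _ _ G b) //; move=> x y _ _; apply: bI.
have -> : [set X | P X] = [set X | (X == b @: setT) && Q _ (path_rel l) setT].
  apply/setP=> X; rewrite !inE PE; apply/idP/idP.
  - case/and3P=> QX /forallP bX _; have sX := QS _ _ _ QX.
    have e : b @: setT == X.
      rewrite eqEcard sX card_imset // cardsT card_ord leqnn andbT.
      by apply/subsetP=> v /imsetP[s _ ->].
    by rewrite eq_sym e -QB (eqP e) QX.
  - case/andP=> /eqP -> q; rewrite QB q ex andbT; apply/forallP=> s; exact: imset_f.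
case: (Q _ (path_rel l) setT).
- rewrite -[RHS]/1 -(cards1 (b @: setT)); apply: eq_card=> X; by rewrite !inE andbT.
- by rewrite -[RHS]/0; apply: eq_card0=> X; rewrite !inE andbF.
Qed.


Definition pu (n x : nat) : rel 'I_n := fun i j =>
  (((nat_of_ord i).+1 == nat_of_ord j) && (nat_of_ord j != x)) || (((nat_of_ord j).+1 == nat_of_ord i) && (nat_of_ord i != x)).

Arguments pu : clear implicits.

Definition natI n (d : 'I_n) (p : nat) : 'I_n := insubd d p.

Lemma natIE n (d : 'I_n) p : p < n -> nat_of_ord (natI d p) = p.
Proof. by move=> h; rewrite /natI val_insubd h. Qed.

Definition tw n (d : 'I_n) (x0 c0 c1 : nat) M (i : 'I_M) : 'I_n :=
  natI d (if nat_of_ord i < x0 then c0 + nat_of_ord i else nat_of_ord i - x0 + c1).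
Definition af n (d : 'I_n) (c : nat) l (s : 'I_l) : 'I_n := natI d (c + nat_of_ord s).

Ltac ifl := repeat (case: ifP => /= ?); repeat (match goal with H : _ = false |- _ => move/negbT in H end); lia.

Lemma twE n (d : 'I_n) x0 c0 c1 M (i : 'I_M) : c0 + x0 <= n -> c1 + M <= n + x0 -> x0 <= M ->
  nat_of_ord (tw d x0 c0 c1 i) = if nat_of_ord i < x0 then c0 + nat_of_ord i else nat_of_ord i - x0 + c1.
Proof. move=> *; have hi := ltn_ord i; rewrite /tw natIE //; ifl. Qed.

Lemma afE n (d : 'I_n) c l (s : 'I_l) : c + l <= n -> nat_of_ord (af d c s) = c + nat_of_ord s.
Proof. move=> *; have hi := ltn_ord s; rewrite /af natIE //; lia. Qed.

Lemma ex_tw n (d : 'I_n) x0 c0 c1 M (v : 'I_n) : c0 + x0 <= n -> c1 + M <= n + x0 -> x0 <= M ->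
  [exists i : 'I_M, v == tw d x0 c0 c1 i] =
  ((c0 <= v) && (v < c0 + x0)) || ((c1 <= v) && (v + x0 < c1 + M)).
Proof.
move=> h1 h2 h3; apply/existsP/idP.
- case=> i /eqP ->; have := ltn_ord i; rewrite twE //; ifl.
- case/orP=> /andP[h4 h5].
  + have hi : v - c0 < M by lia.
    exists (Ordinal hi); apply/eqP/ord_inj; rewrite twE //=; ifl.
  + have hi : v - c1 + x0 < M by lia.
    exists (Ordinal hi); apply/eqP/ord_inj; rewrite twE //=; ifl.
Qed.

Lemma ex_af n (d : 'I_n) c l (v : 'I_n) : c + l <= n ->
  [exists s : 'I_l, v == af d c s] = ((c <= v) && (v < c + l)).
Proof.
move=> h1; apply/existsP/idP.
- case=> i /eqP ->; have := ltn_ord i; rewrite afE //; lia.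
- case/andP=> h4 h5; have hi : v - c < l by lia.
  exists (Ordinal hi); apply/eqP/ord_inj; rewrite afE //=; lia.
Qed.

Lemma allp_b n (pos : nat -> 'I_n -> bool) m (b : 'I_m -> 'I_n) X :
  (forall (s : 'I_m) v, pos s v = (v == b s)) -> allp pos X m = [forall s, b s \in X].
Proof.
move=> h; apply/allpP/forallP=> [H s | H t tm].
- by have [v vX] := H s (ltn_ord s); rewrite h => /eqP <-.
- exists (b (Ordinal tm)) => //; by rewrite (h (Ordinal tm)).
Qed.

Lemma nex_forall n (ex inrr : pred 'I_n) (X : {set 'I_n}) :
  (forall v, inrr v = ~~ ex v) -> ~~ [exists v in X, ex v] = [forall v in X, inrr v].
Proof.
move=> h; rewrite negb_exists; apply: eq_forallb=> v; by rewrite h negb_and implybE.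
Qed.

Definition afr n (d : 'I_n) (c : nat) l (s : 'I_l) : 'I_n := natI d (c - nat_of_ord s).

Lemma afrE n (d : 'I_n) c l (s : 'I_l) : c < n -> l <= c.+1 -> nat_of_ord (afr d c s) = c - s.
Proof. move=> *; have hi := ltn_ord s; rewrite /afr natIE //; lia. Qed.

Lemma ex_afr n (d : 'I_n) c l (v : 'I_n) : c < n -> l <= c.+1 ->
  [exists s : 'I_l, v == afr d c s] = ((c < v + l) && (v <= c)).
Proof.
move=> h1 h2; apply/existsP/idP.
- case=> i /eqP ->; have := ltn_ord i; rewrite afrE //; lia.
- case/andP=> h4 h5; have hi : c - v < l by lia.
  exists (Ordinal hi); apply/eqP/ord_inj; rewrite afrE //=; lia.
Qed.

Lemma path_relE n (i j : 'I_n) : path_rel n i j = ((nat_of_ord i).+1 == j) || ((nat_of_ord j).+1 == i).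
Proof. by []. Qed.

Lemma eq_ordE n (u v : 'I_n) : (u == v) = (nat_of_ord u == nat_of_ord v).
Proof. by []. Qed.

Lemma stepA k :
  (forall k', k' < k -> forall Q, Qinv Q -> Qsize Q k' -> forall N x y,
     k' <= x.+1 -> k' <= y.+1 -> x + k' <= N.+1 -> y + k' <= N.+1 ->
     cnt (pu N x) Q = cnt (pu N y) Q) ->
  forall Q, Qinv Q -> Qsize Q k -> forall n x, k <= x.+1 -> k + x <= n ->
  cnt (pu n x) Q = cnt (pu n x.+1) Q.
Proof.
move=> IH Q QI QS n x h1 h2; rewrite /cnt.
apply: (@cf_cmp k n n (fun X => Q _ (pu n x) X) (fun X => Q _ (pu n x.+1) X)
   (fun t (v : 'I_n) => nat_of_ord v == x + t) (fun t (v : 'I_n) => nat_of_ord v + t == x)).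
- by move=> X /QS ->.
- by move=> X /QS ->.
- move=> t t' v /eqP h /eqP h'; lia.
- move=> t t' v /eqP h /eqP h'; lia.
move=> m mk; case: (posnP m) => [-> | m0].
  rewrite /cg; apply: eq_card=> X; rewrite !inE /allp /=.
  have -> : [exists v in X, nat_of_ord v + 0 == x] = [exists v in X, nat_of_ord v == x].
    by apply: eq_existsb=> v; rewrite addn0.
  have -> : [exists v in X, nat_of_ord v == x + 0] = [exists v in X, nat_of_ord v == x].
    by apply: eq_existsb=> v; rewrite addn0.
  rewrite !andbT.
  case: (boolP [exists v in X, nat_of_ord v == x]) => [_|nx]; first by rewrite !andbF.
  rewrite (QI _ _ _ (pu n x.+1) id) ?imset_id //.
  move=> i j iX jX.
  have hi : nat_of_ord i != x by apply: contra nx => /eqP h; apply/existsP; exists i; rewrite iX h eqxx.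
  have hj : nat_of_ord j != x by apply: contra nx => /eqP h; apply/existsP; exists j; rewrite jX h eqxx.
  rewrite /pu; lia.
have xn : x < n by lia.
have h2' : x + k <= n by lia.
pose d := Ordinal xn.
case: (ltngtP m k) => [mk'| |mk']; first last.
-
  subst m.
  rewrite /cg (@runcase n k (pu n x) (fun s => af d x s) Q _ (fun X => ~~ [exists v in X, nat_of_ord v == x + k])) //.
  rewrite (@runcase n k (pu n x.+1) (fun s => afr d x s) Q _ (fun X => ~~ [exists v in X, nat_of_ord v + k == x])) //.
  + move=> s s' /(congr1 (@nat_of_ord n)); rewrite !afrE // => h; apply/ord_inj; have := ltn_ord s; have := ltn_ord s'; lia.
  + move=> s s'; rewrite path_relE /pu !afrE //; have := ltn_ord s; have := ltn_ord s'; lia.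
  + move=> X; rewrite (@allp_b _ _ _ (fun s => afr d x s)) ?andbA //.
    move=> s v; rewrite eq_ordE afrE //; have := ltn_ord s; lia.
  + apply/negP=> /existsP[v /andP[/imsetP[s _ ->]]]; rewrite afrE //; have := ltn_ord s; lia.
  + move=> s s' /(congr1 (@nat_of_ord n)); rewrite !afE // => h; apply/ord_inj; lia.
  + move=> s s'; rewrite path_relE /pu !afE //; have := ltn_ord s; have := ltn_ord s'; lia.
  + move=> X; rewrite (@allp_b _ _ _ (fun s => af d x s)) ?andbA //.
    move=> s v; rewrite eq_ordE afE //.
  + apply/negP=> /existsP[v /andP[/imsetP[s _ ->]]]; rewrite afE //; have := ltn_ord s; lia.
- move=> km; lia.
have hm : m <= x by lia.
rewrite /cg.
rewrite (@window n (n - m - 1) m (pu n x) (pu (n - m - 1) x) Q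
   (fun i => tw d x 0 (x + m + 1) i) (fun s => af d x s)); first last.
- move=> X; rewrite (@allp_b _ _ _ (fun s => af d x s)); last first.
    by move=> s v; rewrite eq_ordE afE //; lia.
  have HH := (@nex_forall n (fun v => nat_of_ord v == x + m) (fun v => [exists s : 'I_m, v == af d x s] || [exists i : 'I_(n - m - 1), v == tw d x 0 (x + m + 1) i]) X).
  rewrite HH ?andbA //.
  move=> v; rewrite ex_af ?ex_tw; try lia; have := ltn_ord v; lia.
- move=> i s; rewrite eq_ordE afE ?twE; try lia; have := ltn_ord i; have := ltn_ord s; ifl.
- move=> i s; rewrite /pu afE ?twE; try lia; have := ltn_ord i; have := ltn_ord s; ifl.
- move=> i s; rewrite /pu afE ?twE; try lia; have := ltn_ord i; have := ltn_ord s; ifl.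
- move=> s s'; rewrite path_relE /pu !afE; try lia; have := ltn_ord s; have := ltn_ord s'; lia.
- move=> i j; rewrite /pu !twE; try lia; have := ltn_ord i; have := ltn_ord j; ifl.
- move=> s s' /(congr1 (@nat_of_ord n)); rewrite !afE; try lia; move=> h; apply/ord_inj; lia.
- move=> i j /(congr1 (@nat_of_ord n)); rewrite !twE; try lia; move=> h; apply/ord_inj; move: h.
  have := ltn_ord i; have := ltn_ord j; ifl.
- done.
rewrite (@window n (n - m - 1) m (pu n x.+1) (pu (n - m - 1) (x - m)) Q
   (fun i => tw d (x - m) 0 (x + 1) i) (fun s => afr d x s)); first last.
- move=> X; rewrite (@allp_b _ _ _ (fun s => afr d x s)); last first.
    by move=> s v; rewrite eq_ordE afrE //; have := ltn_ord s; lia.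
  have HH := (@nex_forall n (fun v => nat_of_ord v + m == x) (fun v => [exists s : 'I_m, v == afr d x s] || [exists i : 'I_(n - m - 1), v == tw d (x - m) 0 (x + 1) i]) X).
  rewrite HH ?andbA //.
  move=> v; rewrite ex_afr ?ex_tw; try lia; have := ltn_ord v; lia.
- move=> i s; rewrite eq_ordE afrE ?twE; try lia; have := ltn_ord i; have := ltn_ord s; ifl.
- move=> i s; rewrite /pu afrE ?twE; try lia; have := ltn_ord i; have := ltn_ord s; ifl.
- move=> i s; rewrite /pu afrE ?twE; try lia; have := ltn_ord i; have := ltn_ord s; ifl.
- move=> s s'; rewrite path_relE /pu !afrE; try lia; have := ltn_ord s; have := ltn_ord s'; lia.
- move=> i j; rewrite /pu !twE; try lia; have := ltn_ord i; have := ltn_ord j; ifl.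
- move=> s s' /(congr1 (@nat_of_ord n)); rewrite !afrE; try lia; move=> h; apply/ord_inj; move: h.
  have := ltn_ord s; have := ltn_ord s'; lia.
- move=> i j /(congr1 (@nat_of_ord n)); rewrite !twE; try lia; move=> h; apply/ord_inj; move: h.
  have := ltn_ord i; have := ltn_ord j; ifl.
- done.
apply: (IH (k - m)); try lia.
- exact: Qext_inv.
- exact: Qext_size.
Qed.

Lemma chain_gen (f : nat -> nat) lo hi :
  (forall x, lo <= x -> x < hi -> f x = f x.+1) ->
  forall x y, lo <= x -> lo <= y -> x <= hi -> y <= hi -> f x = f y.
Proof.
move=> st.
have up : forall d x, lo <= x -> x + d <= hi -> f x = f (x + d).
  elim=> [|d IH] x h1 h2; first by rewrite addn0.
  rewrite IH; [|lia|lia]; rewrite st; [by rewrite addnS| lia | lia].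
move=> x y h1 h2 h3 h4; case: (leqP x y) => h.
- rewrite (up (y - x) x) //; [by rewrite subnKC| lia].
- rewrite (up (x - y) y) //; [by rewrite subnKC // ltnW| lia].
Qed.

Lemma lemA k : forall Q, Qinv Q -> Qsize Q k -> forall N x y,
  k <= x.+1 -> k <= y.+1 -> x + k <= N.+1 -> y + k <= N.+1 ->
  cnt (pu N x) Q = cnt (pu N y) Q.
Proof.
elim/ltn_ind: k => k IH Q QI QS N x y h1 h2 h3 h4.
apply: (@chain_gen (fun x => cnt (pu N x) Q) k.-1 (N.+1 - k)); try lia.
move=> z hz1 hz2; apply: (stepA IH) => //; lia.
Qed.



Definition cp (q n : nat) : rel 'I_n := fun i j =>
  if (i < q) && (j < q) then
    (nat_of_ord i != j) &&
    (((if (nat_of_ord i).+1 == q then 0 else (nat_of_ord i).+1) == j) ||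
     ((if (nat_of_ord j).+1 == q then 0 else (nat_of_ord j).+1) == i))
  else (q <= i) && (q <= j) && (((nat_of_ord i).+1 == j) || ((nat_of_ord j).+1 == i)).
Arguments cp : clear implicits.

Lemma count_posB n (pos : nat -> 'I_n -> bool) (X : {set 'I_n}) m :
  (forall t t' v, t < m -> t' < m -> pos t v -> pos t' v -> t = t') -> allp pos X m -> m <= #|X|.
Proof.
move=> pI /allpP h.
have: forall t : 'I_m, exists v, (v \in X) && pos t v.
  by move=> t; have [v vX pv] := h t (ltn_ord t); exists v; rewrite vX.
case/fin_all_exists=> g gP.
have gI : injective g.
  move=> t t' e; apply: val_inj; case/andP: (gP t) => _ p1; case/andP: (gP t') => _ p2.
  apply: (pI _ _ (g t)); rewrite ?ltn_ord //; by rewrite e.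
rewrite -{1}(card_ord m) -cardsT -(card_imset setT gI); apply: subset_leq_card.
apply/subsetP=> v /imsetP[t _ ->]; by case/andP: (gP t).
Qed.

Lemma allp_comb n (p1 p2 : nat -> 'I_n -> bool) X m j :
  allp p1 X m -> allp p2 X j -> allp (fun t => if t < m then p1 t else p2 (t - m)) X (m + j).
Proof.
move=> /allpP h1 /allpP h2; apply/allpP=> t tm; case: ifP => h.
- by apply: h1.
- have [|v vX pv] := h2 (t - m); first lia.
  by exists v.
Qed.

Lemma cf_cmpK K n1 n2 (R1 : {set 'I_n1} -> bool) (R2 : {set 'I_n2} -> bool)
   (pos1 : nat -> 'I_n1 -> bool) (pos2 : nat -> 'I_n2 -> bool) :
  (forall X, R1 X -> allp pos1 X K -> False) -> (forall X, R2 X -> allp pos2 X K -> False) ->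
  (forall j, j < K -> cg R1 pos1 j = cg R2 pos2 j) ->
  #|[set X | R1 X]| = #|[set X | R2 X]|.
Proof.
move=> Z1 Z2 E; rewrite -(cf0 R1 pos1) -(cf0 R2 pos2) !(cf_sum _ _ K).
have -> : cf R1 pos1 K = 0 by apply: eq_card0=> X; rewrite inE; apply/negP=> /andP[] /Z1 h /h.
have -> : cf R2 pos2 K = 0 by apply: eq_card0=> X; rewrite inE; apply/negP=> /andP[] /Z2 h /h.
rewrite !addn0; apply: eq_bigr=> i _; apply: E; exact: ltn_ord.
Qed.

Lemma allp_sub n (p : nat -> pred 'I_n) m X :
  (forall t, t < m -> exists v, p t v) -> (forall t v v', p t v -> p t v' -> v = v') ->
  allp p X m = ([set v | [exists t : 'I_m, p t v]] \subset X).
Proof.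
move=> hE hU; apply/allpP/subsetP=> [h v | h t tm].
- rewrite inE => /existsP[t ptv]; have [w wX pw] := h t (ltn_ord t).
  by rewrite (hU _ _ _ ptv pw).
- have [v pv] := hE t tm; exists v => //; apply: h; rewrite inE; apply/existsP.
  by exists (Ordinal tm).
Qed.

Lemma allp2_forall n (p1 p2 : nat -> pred 'I_n) m j l (b : 'I_l -> 'I_n) X :
  (forall t, t < m -> exists v, p1 t v) -> (forall t v v', p1 t v -> p1 t v' -> v = v') ->
  (forall t, t < j -> exists v, p2 t v) -> (forall t v v', p2 t v -> p2 t v' -> v = v') ->
  (forall v, [exists t : 'I_m, p1 t v] || [exists t : 'I_j, p2 t v] = [exists s, v == b s]) ->
  allp p1 X m && allp p2 X j = [forall s, b s \in X].
Proof.
move=> e1 u1 e2 u2 hb; rewrite (allp_sub _ e1 u1) (allp_sub _ e2 u2) -subUset.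
have -> : [forall s, b s \in X] = (b @: setT \subset X).
  apply/forallP/subsetP=> [h v /imsetP[s _ ->] // | h s]; apply: h; exact: imset_f.
suff -> : [set v | [exists t : 'I_m, p1 t v]] :|: [set v | [exists t : 'I_j, p2 t v]] = b @: setT by [].
apply/setP=> v; rewrite !inE hb.
apply/existsP/imsetP=> [[s /eqP ->]|[s _ ->]]; first by exists s.
by exists s.
Qed.

Lemma nex2_forall n (e1 e2 inrr : pred 'I_n) (X : {set 'I_n}) :
  (forall v, inrr v = ~~ e1 v && ~~ e2 v) ->
  ~~ [exists v in X, e1 v] && ~~ [exists v in X, e2 v] = [forall v in X, inrr v].
Proof.
move=> h; rewrite !negb_exists; apply/andP/forallP=> [[/forallP H1 /forallP H2] v|H].
- by rewrite h; move: (H1 v) (H2 v); case: (v \in X); case: (e1 v); case: (e2 v).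
- by split; apply/forallP=> v; move: (H v); rewrite h; case: (v \in X); case: (e1 v); case: (e2 v).
Qed.

Lemma reorg (a b c d e : bool) : a && b && c && d && e = [&& a, b && d & c && e].
Proof. by case: a; case: b; case: c; case: d; case: e. Qed.

Lemma exR_ar n m c (v : 'I_n) : [exists t : 'I_m, nat_of_ord v == c + t] = (c <= v) && (v < c + m).
Proof.
apply/existsP/idP=> [[t /eqP h]|/andP[h1 h2]]; first by have := ltn_ord t; lia.
have ht : v - c < m by lia.
by exists (Ordinal ht); apply/eqP => /=; lia.
Qed.

Lemma exL_ar n m q (v : 'I_n) : [exists t : 'I_m, (nat_of_ord v + t).+1 == q] = (q <= v + m) && (v < q).
Proof.
apply/existsP/idP=> [[t /eqP h]|/andP[h1 h2]]; first by have := ltn_ord t; lia.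
have ht : q - v - 1 < m by lia.
by exists (Ordinal ht); apply/eqP => /=; lia.
Qed.

Lemma pL_ex n q t : t < q -> q <= n -> exists v : 'I_n, (nat_of_ord v + t).+1 == q.
Proof. move=> h1 h2; have h : q - 1 - t < n by lia. by exists (Ordinal h); apply/eqP => /=; lia. Qed.

Lemma pL_un n q t (v v' : 'I_n) : (nat_of_ord v + t).+1 == q -> (nat_of_ord v' + t).+1 == q -> v = v'.
Proof. move=> /eqP h /eqP h'; apply/ord_inj; lia. Qed.

Lemma pR_ex n c t : c + t < n -> exists v : 'I_n, nat_of_ord v == c + t.
Proof. move=> h; by exists (Ordinal h). Qed.

Lemma pR_un n c t (v v' : 'I_n) : nat_of_ord v == c + t -> nat_of_ord v' == c + t -> v = v'.
Proof. move=> /eqP h /eqP h'; apply/ord_inj; lia. Qed.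

Lemma mainQ k Q q r : Qinv Q -> Qsize Q k -> k + 1 <= q -> k <= r + 1 ->
  cnt (path_rel (q + r)) Q = cnt (cp q (q + r)) Q.
Proof.
move=> QI QS hq hr; rewrite /cnt.
pose pL t (v : 'I_(q + r)) := (nat_of_ord v + t).+1 == q.
apply: (@cf_cmp k _ _ (fun X => Q _ (path_rel (q + r)) X) (fun X => Q _ (cp q (q + r)) X) pL pL).
- by move=> X /QS ->.
- by move=> X /QS ->.
- move=> t t' v /eqP h /eqP h'; lia.
- move=> t t' v /eqP h /eqP h'; lia.
move=> m mk; case: (posnP m) => [-> | m0].
  rewrite /cg; apply: eq_card=> X; rewrite !inE /allp /=.
  case: (boolP [exists v in X, pL 0 v]) => [_|nx]; first by rewrite !andbF.
  rewrite !andbT (QI _ _ _ (cp q (q + r)) id) ?imset_id //.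
  move=> i j iX jX.
  have hi : (nat_of_ord i + 0).+1 != q by apply: contra nx => h; apply/existsP; exists i; rewrite iX /pL h.
  have hj : (nat_of_ord j + 0).+1 != q by apply: contra nx => h; apply/existsP; exists j; rewrite jX /pL h.
  rewrite path_relE /cp; ifl.
have dq : q - 1 < q + r by lia.
pose d := Ordinal dq.
pose pR c t (v : 'I_(q + r)) := nat_of_ord v == c + t.
pose pC c t := if t < m then pL t else pR c (t - m).
rewrite /cg.
apply: (@cf_cmpK (k - m + 1) _ _
   (fun X => Q _ (path_rel (q + r)) X && allp pL X m && ~~ [exists v in X, pL m v])
   (fun X => Q _ (cp q (q + r)) X && allp pL X m && ~~ [exists v in X, pL m v]) (pR q) (pR 0)).
- move=> X /andP[/andP[QX aL] _] aR; have := count_posB (pos := pC q) _ (allp_comb aL aR).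
  rewrite (QS _ _ _ QX) => h; have : k < m + (k - m + 1) by lia.
  rewrite ltnNge h //; move=> t t' v ht ht'; rewrite /pC /pL /pR; ifl.
- move=> X /andP[/andP[QX aL] _] aR; have := count_posB (pos := pC 0) _ (allp_comb aL aR).
  rewrite (QS _ _ _ QX) => h; have : k < m + (k - m + 1) by lia.
  rewrite ltnNge h //; move=> t t' v ht ht'; rewrite /pC /pL /pR; ifl.
move=> j jK; rewrite /cg.
have hmj : m + j <= k by lia.
have pLe : forall t, t < m -> exists v, pL t v by move=> t ht; apply: pL_ex; lia.
have pLu : forall t v v', pL t v -> pL t v' -> v = v' by move=> t v v'; apply: pL_un.
have pRu : forall c t v v', pR c t v -> pR c t v' -> v = v' by move=> c t v v'; apply: pR_un.
have pR1e : forall t, t < j -> exists v, pR q t v by move=> t ht; apply: pR_ex; lia.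
have pR2e : forall t, t < j -> exists v, pR 0 t v by move=> t ht; apply: pR_ex; lia.
case: (ltngtP (m + j) k) => [lt | gt | eq]; last first.
-
  have QS' : Qsize Q (m + j) by rewrite eq.
  rewrite (@runcase (q + r) (m + j) (path_rel (q + r)) (fun s => af d (q - m) s) Q _
     (fun X => ~~ [exists v in X, pL m v] && ~~ [exists v in X, pR q j v])) //.
  + rewrite (@runcase (q + r) (m + j) (cp q (q + r)) (fun s => tw d m (q - m) 0 s) Q _
       (fun X => ~~ [exists v in X, pL m v] && ~~ [exists v in X, pR 0 j v])) //.
    * move=> s s' /(congr1 (@nat_of_ord _)); rewrite !twE; try lia.
      move=> h; apply/ord_inj; move: h; have := ltn_ord s; have := ltn_ord s'; ifl.
    * move=> s s'; rewrite path_relE /cp !twE; try lia.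
      have := ltn_ord s; have := ltn_ord s'; case: (ltnP s m) => ? ; case: (ltnP s' m) => ? /=; ifl.
    * move=> X; rewrite reorg (@allp2_forall _ pL (pR 0) m j (m + j) (fun s : 'I_(m + j) => tw d m (q - m) 0 s) X pLe pLu pR2e (pRu 0)) //.
      move=> v; rewrite /pL /pR exL_ar exR_ar ex_tw; lia.
    * apply/andP; split; apply/negP=> /existsP[v /andP[/imsetP[s _ ->]]]; rewrite /pL /pR twE;
        try lia; have := ltn_ord s; ifl.
  + move=> s s' /(congr1 (@nat_of_ord _)); rewrite !afE; try lia; move=> h; apply/ord_inj; lia.
  + move=> s s'; rewrite !path_relE !afE; try lia.
  + move=> X; rewrite reorg (@allp2_forall _ pL (pR q) m j (m + j) (fun s : 'I_(m + j) => af d (q - m) s) X pLe pLu pR1e (pRu q)) //.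
    move=> v; rewrite /pL /pR exL_ar exR_ar ex_af; lia.
  + apply/andP; split; apply/negP=> /existsP[v /andP[/imsetP[s _ ->]]]; rewrite /pL /pR afE;
      try lia; have := ltn_ord s; lia.
- lia.
pose N := q + r - (m + j) - 2.
rewrite (@window (q + r) N (m + j) (path_rel (q + r)) (pu N (q - 1 - m)) Q
   (fun i => tw d (q - 1 - m) 0 (q + j + 1) i) (fun s => af d (q - m) s)); first last.
- move=> X; rewrite reorg (@allp2_forall _ pL (pR q) m j (m + j) (fun s : 'I_(m + j) => af d (q - m) s) X pLe pLu pR1e (pRu q)); last first.
    by move=> v; rewrite /pL /pR exL_ar exR_ar ex_af; lia.
  rewrite (@nex2_forall _ (fun v => pL m v) (fun v => pR q j v)
    (fun v => [exists s : 'I_(m + j), v == af d (q - m) s] || [exists i : 'I_N, v == tw d (q - 1 - m) 0 (q + j + 1) i])) //.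
  move=> v; rewrite ex_af ?ex_tw /pL /pR; try lia; have := ltn_ord v; lia.
- move=> i s; rewrite eq_ordE afE ?twE; try lia; have := ltn_ord i; have := ltn_ord s; ifl.
- move=> i s; rewrite path_relE afE ?twE; try lia; have := ltn_ord i; have := ltn_ord s; ifl.
- move=> i s; rewrite path_relE afE ?twE; try lia; have := ltn_ord i; have := ltn_ord s; ifl.
- move=> s s'; rewrite !path_relE !afE; try lia.
- move=> i j'; rewrite /pu path_relE !twE; try lia; have := ltn_ord i; have := ltn_ord j'; ifl.
- move=> s s' /(congr1 (@nat_of_ord _)); rewrite !afE; try lia; move=> h; apply/ord_inj; lia.
- move=> i j' /(congr1 (@nat_of_ord _)); rewrite !twE; try lia; move=> h; apply/ord_inj; move: h.
  have := ltn_ord i; have := ltn_ord j'; ifl.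
- done.
rewrite (@window (q + r) N (m + j) (cp q (q + r)) (pu N (q - 2 - (m + j))) Q
   (fun i => tw d (q - 2 - (m + j)) (j + 1) q i) (fun s => tw d m (q - m) 0 s)); first last.
- move=> X; rewrite reorg (@allp2_forall _ pL (pR 0) m j (m + j) (fun s : 'I_(m + j) => tw d m (q - m) 0 s) X pLe pLu pR2e (pRu 0)); last first.
    by move=> v; rewrite /pL /pR exL_ar exR_ar ex_tw; lia.
  rewrite (@nex2_forall _ (fun v => pL m v) (fun v => pR 0 j v)
    (fun v => [exists s : 'I_(m + j), v == tw d m (q - m) 0 s] || [exists i : 'I_N, v == tw d (q - 2 - (m + j)) (j + 1) q i])) //.
  move=> v; rewrite !ex_tw /pL /pR; try lia; have := ltn_ord v; lia.
- move=> i s; rewrite eq_ordE !twE; try lia; have := ltn_ord i; have := ltn_ord s.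
  case: (ltnP s m) => ? ; case: (ltnP i (q - 2 - (m + j))) => ? /=; ifl.
- move=> i s; rewrite /cp !twE; try lia; have := ltn_ord i; have := ltn_ord s.
  case: (ltnP s m) => ? ; case: (ltnP i (q - 2 - (m + j))) => ? /=; ifl.
- move=> i s; rewrite /cp !twE; try lia; have := ltn_ord i; have := ltn_ord s.
  case: (ltnP s m) => ? ; case: (ltnP i (q - 2 - (m + j))) => ? /=; ifl.
- move=> s s'; rewrite path_relE /cp !twE; try lia.
  have := ltn_ord s; have := ltn_ord s'; case: (ltnP s m) => ? ; case: (ltnP s' m) => ? /=; ifl.
- move=> i j'; rewrite /pu /cp !twE; try lia; have := ltn_ord i; have := ltn_ord j'.
  case: (ltnP i (q - 2 - (m + j))) => ? ; case: (ltnP j' (q - 2 - (m + j))) => ? /=; ifl.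
- move=> s s' /(congr1 (@nat_of_ord _)); rewrite !twE; try lia.
  move=> h; apply/ord_inj; move: h; have := ltn_ord s; have := ltn_ord s'; ifl.
- move=> i j' /(congr1 (@nat_of_ord _)); rewrite !twE; try lia; move=> h; apply/ord_inj; move: h.
  have := ltn_ord i; have := ltn_ord j'; ifl.
- done.
apply: (lemA (k := k - (m + j))); rewrite /N; try lia.
- exact: Qext_inv.
- exact: Qext_size.
Qed.


Lemma modS (i q : nat) : i < q -> i.+1 %% q = if i.+1 == q then 0 else i.+1.
Proof.
move=> h; case: eqP => [->|ne]; first by rewrite modnn.
by rewrite modn_small //; lia.
Qed.

Theorem lemma3p1 (T : finType) (eL : rel T) (k q r : nat) :
  linear_forest eL -> #|T| = k ->
  k + 1 <= q -> k <= r + 1 ->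
  s_count (path_rel (q + r)) eL =
  s_count (sum_rel (cycle_rel q) (path_rel r)) eL.
Proof.
move=> _ Tk hq hr.
have QI := Q0_inv eL.
have QS : Qsize (Q0 T eL) k by rewrite -Tk; exact: Q0_size.
have -> : s_count (path_rel (q + r)) eL = cnt (path_rel (q + r)) (Q0 T eL) by [].
have -> : s_count (sum_rel (cycle_rel q) (path_rel r)) eL = cnt (sum_rel (cycle_rel q) (path_rel r)) (Q0 T eL) by [].
rewrite (mainQ QI QS hq hr).
symmetry; apply: (cnt_bij QI (f := @unsplit q r)).
- exists (@split q r); [exact: unsplitK | exact: splitK].
- have hq1 : 0 < q by lia.
  move=> [i|i] [j|j] /=; rewrite /cp /cycle_rel /path_rel /=; have hi := ltn_ord i; have hj := ltn_ord j.
  + by rewrite !modS // hi hj.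
  + ifl.
  + ifl.
  + ifl.
Qed.
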